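(* Let $d\in\mathbb N$, $Q,K\in\mathbb R^{d\times d}$, $A:=K^\top Q/\sqrt d$, $V=I_d$ (so $k=d$), and let $f$ be self-attention with parameters $(A,V)$. Assume $A$ has at least one real eigenvalue; let $\gamma_1\ge\dots\ge\gamma_\delta$ be its real eigenvalues and $\gamma:=\max(-\gamma_\delta,\gamma_1/8)$, and assume $\gamma>0$. Let $R\mapsto n(R)\in\mathbb N$ satisfy $n(R)\sim_{R\to+\infty}\exp(2\gamma R^2)$. Then there exists a function $\theta:[0,+\infty)\to[0,+\infty)$ with $\theta(R)\to1$ as $R\to+\infty$ such that $$\mathrm{Lip}\big(f_{|B_R^{n(R)}}\big)\ge\theta(R)\,\frac{\gamma}{2}\,R^2e^{\gamma R^2}.$$
   Context: For $X=(x_1,\dots,x_n)\in(\mathbb R^d)^n$, $f(X)=\big(V\sum_{j=1}^nP_{ij}x_j\big)_{1\le i\le n}$ with $P_{ij}=\exp(x_i^\top A^\top x_j)/\sum_{l=1}^n\exp(x_i^\top A^\top x_l)$. $B_R$ is the closed ball in $\mathbb R^d$ of center 0, radius $R$; $\mathrm{Lip}(f_{|\mathcal X})=\sup_{X\ne Y\in\mathcal X}\|f(X)-f(Y)\|_F/\|X-Y\|_F$ with the Frobenius norm. $\varphi(R)\sim\psi(R)$ means $\varphi(R)/\psi(R)\to1$. *)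

(* Defs.v *)
From HB Require Import structures.
From mathcomp Require Import all_boot all_order all_algebra.
From mathcomp Require Import all_classical all_reals all_analysis.
Set Implicit Arguments. Unset Strict Implicit. Unset Printing Implicit Defensive.
Import Order.TTheory GRing.Theory Num.Theory.
Local Open Scope ring_scope.
Local Open Scope classical_set_scope.

(* A point X = (x_1,...,x_n) of (R^d)^n is an n x d matrix whose i-th row is x_i. *)

Definition attn_weight (R : realType) (n d : nat) (A : 'M[R]_d)
  (X : 'M[R]_(n, d)) (i j : 'I_n) : R :=
  expR ((row i X *m A^T *m (row j X)^T) 0 0) /
  \sum_(l < n) expR ((row i X *m A^T *m (row l X)^T) 0 0).

(* Self-attention: f(X)_i = V (sum_j P_ij x_j); as a row vector: (sum_j P_ij x_j) V^T. *)
Definition self_attention (R : realType) (n d k : nat) (A : 'M[R]_d)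
  (V : 'M[R]_(k, d)) (X : 'M[R]_(n, d)) : 'M[R]_(n, k) :=
  \matrix_(i < n) ((\sum_(j < n) attn_weight A X i j *: row j X) *m V^T).

Definition frob (R : realType) (m p : nat) (M : 'M[R]_(m, p)) : R :=
  Num.sqrt (\sum_(i < m) \sum_(j < p) M i j ^+ 2).

Definition ballR_pow (R : realType) (n d : nat) (r : R) : set 'M[R]_(n, d) :=
  [set X | forall i : 'I_n, frob (row i X) <= r].

(* The value 0 is included so that the Lipschitz constant of a function on a
   set with at most one point is 0 (the standard convention). *)
Definition lip_on (R : realType) (m p q s : nat)
  (f : 'M[R]_(m, p) -> 'M[R]_(q, s)) (S : set 'M[R]_(m, p)) : \bar R :=
  ereal_sup ([set (0 : \bar R)] `|`
    [set z | exists X Y, [/\ S X, S Y, X <> Y & z = (frob (f X - f Y) / frob (X - Y))%:E]]).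

(* Main.v *)
Require Import Defs.
From HB Require Import structures.
From mathcomp Require Import all_boot all_order all_algebra.
From mathcomp Require Import all_classical all_reals all_analysis.
From mathcomp Require Import ring lra.
Import Order.TTheory GRing.Theory Num.Theory numFieldNormedType.Exports.
Local Open Scope ring_scope.
Local Open Scope classical_set_scope.
Set Implicit Arguments.

Section Alg.
Variables (R : realType).

Lemma row_rk1 n d (v : 'cV[R]_n) (u : 'rV[R]_d) i : row i (v *m u) = v i 0 *: u.
Proof. by apply/rowP => k; rewrite !mxE big_ord1. Qed.

Lemma score_rk1 n d (A : 'M[R]_d) (v : 'cV[R]_n) (u : 'rV[R]_d) i j :
  (row i (v *m u) *m A^T *m (row j (v *m u))^T) 0 0 =
  v i 0 * v j 0 * (u *m A^T *m u^T) 0 0.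
Proof.
rewrite !row_rk1 -!scalemxAl linearZ /= -scalemxAr !mxE; ring.
Qed.

Lemma sa_rk1 n d (A : 'M[R]_d) (v : 'cV[R]_n) (u : 'rV[R]_d) i k :
  self_attention A 1%:M (v *m u) i k =
  (\sum_j attn_weight A (v *m u) i j * v j 0) * u 0 k.
Proof.
rewrite /self_attention mxE trmx1 mulmx1 summxE mulr_suml.
apply: eq_bigr => j _; rewrite !mxE big_ord1; ring.
Qed.

Lemma frob_rk1 n d (c : 'I_n -> R) (u : 'rV[R]_d) (M : 'M[R]_(n, d)) :
  (forall i k, M i k = c i * u 0 k) -> \sum_k u 0 k ^+ 2 = 1 ->
  frob M = Num.sqrt (\sum_i c i ^+ 2).
Proof.
move=> HM Hu; rewrite /frob; congr Num.sqrt; apply: eq_bigr => i _.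
under eq_bigr do rewrite HM exprMn.
by rewrite -mulr_sumr Hu mulr1.
Qed.


Lemma lip_ge m p q s (f : 'M[R]_(m, p) -> 'M[R]_(q, s)) S X Y :
  S X -> S Y -> X <> Y ->
  ((frob (f X - f Y) / frob (X - Y))%:E <= lip_on f S)%E.
Proof. by move=> SX SY XY; apply: ereal_sup_ubound; right; exists X, Y. Qed.

Definition vt n (i0 : 'I_n) (a t : R) : 'cV[R]_n :=
  \col_(j < n) (if j == i0 then t else a).
Arguments vt {n}.

Lemma sum_split n (i0 : 'I_n) a t (F : R -> R) :
  \sum_j F (vt i0 a t j 0) = F t + (n.-1)%:R * F a.
Proof.
rewrite (bigD1 i0) //= !mxE eqxx; congr (_ + _).
rewrite (eq_bigr (fun _ => F a)); last by move=> j /negbTE Hj; rewrite !mxE Hj.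
by rewrite sumr_const cardC1 card_ord mulr_natl.
Qed.

Lemma kappa_eig d (A : 'M[R]_d) (u : 'rV[R]_d) lam :
  u *m A = lam *: u -> \sum_k u 0 k ^+ 2 = 1 ->
  (u *m A^T *m u^T) 0 0 = lam.
Proof.
move=> Hu Hn.
have -> : (u *m A^T *m u^T) 0 0 = ((u *m A^T *m u^T)^T) 0 0 by rewrite [RHS]mxE.
rewrite !trmx_mul !trmxK mulmxA Hu -scalemxAl mxE.
rewrite -[RHS]mulr1 -Hn mxE; congr (_ * _); apply: eq_bigr => k _.
by rewrite !mxE expr2.
Qed.


Definition W (n : nat) (a lam t : R) : R :=
  (expR (a * t * lam) * t + (n.-1)%:R * (expR (a * a * lam) * a)) /
  (expR (a * t * lam) + (n.-1)%:R * expR (a * a * lam)).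

Lemma construct n d (i0 : 'I_n) (A : 'M[R]_d) (u : 'rV[R]_d) lam a s s' (r : R) :
  u *m A = lam *: u -> \sum_k u 0 k ^+ 2 = 1 ->
  `|a| <= r -> `|s| <= r -> `|s'| <= r -> s != s' ->
  ((Num.sqrt (n.-1)%:R * `|W n a lam s - W n a lam s'| / `|s - s'|)%:E <=
    lip_on (@self_attention R n d d A 1%:M) (@ballR_pow R n d r))%E.
Proof.
move=> Hu Hn Ha Hs Hs' ss'.
have inball t : `|t| <= r -> @ballR_pow R n d r (vt i0 a t *m u).
  move=> Ht i; rewrite row_rk1 (@frob_rk1 1 d (fun _ => vt i0 a t i 0) u).
  - rewrite big_ord1 sqrtr_sqr !mxE; by case: ifP.
  - by move=> i' k; rewrite !mxE (ord1 i').
  - exact Hn.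
have uu : (u *m u^T) 0 0 = 1.
  by rewrite -Hn mxE; apply: eq_bigr => k _; rewrite !mxE expr2.
have XY : vt i0 a s *m u <> vt i0 a s' *m u.
  move=> E; move/eqP: ss'; apply.
  have := congr1 (fun M => (M *m u^T) i0 0) E.
  have uu2 : u *m u^T = 1%:M by apply/matrixP => i j; rewrite !ord1 uu mxE.
  by rewrite /= -!mulmxA uu2 !mulmx1 !mxE eqxx.
have wE t i : i != i0 ->
    \sum_j attn_weight A (vt i0 a t *m u) i j * vt i0 a t j 0 = W n a lam t.
  move=> Hi; rewrite /attn_weight.
  have Hsc j l : (row j (vt i0 a t *m u) *m A^T *m (row l (vt i0 a t *m u))^T) 0 0
      = vt i0 a t j 0 * vt i0 a t l 0 * lam by rewrite score_rk1 (kappa_eig Hu Hn).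
  under eq_bigr => j _ do rewrite Hsc (eq_bigr _ (fun l _ => congr1 expR (Hsc i l))).

  rewrite {1 2}/vt mxE (negbTE Hi).
  under eq_bigr do rewrite mulrAC.
  rewrite -mulr_suml.
  rewrite (sum_split i0 a t (fun x => expR (a * x * lam) * x)).
  by rewrite (sum_split i0 a t (fun x => expR (a * x * lam))).
set c := fun i => \sum_j attn_weight A (vt i0 a s *m u) i j * vt i0 a s j 0 -
                  \sum_j attn_weight A (vt i0 a s' *m u) i j * vt i0 a s' j 0.
have Hf : frob (self_attention A 1%:M (vt i0 a s *m u) -
                self_attention A 1%:M (vt i0 a s' *m u)) = Num.sqrt (\sum_i c i ^+ 2).
  apply: frob_rk1 Hn => i k; by rewrite [LHS]mxE [X in _ + X]mxE !sa_rk1 -mulrBl.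
have HX : frob (vt i0 a s *m u - vt i0 a s' *m u) = `|s - s'|.
  rewrite (@frob_rk1 n d (fun i => vt i0 a s i 0 - vt i0 a s' i 0) u); last 2 first.
  - by move=> i k; rewrite [LHS]mxE [X in _ + X]mxE !mxE !big_ord1 !mxE mulrBl.
  - exact Hn.
  rewrite (bigD1 i0) //= big1 ?addr0 ?sqrtr_sqr ?mxE ?eqxx //.
  by move=> i /negbTE Hi; rewrite !mxE Hi subrr expr0n.
apply: le_trans _ (@lip_ge _ _ _ _ (@self_attention R n d d A 1%:M) (@ballR_pow R n d r) _ _ (inball _ Hs) (inball _ Hs') XY).
rewrite lee_fin Hf HX ler_wpM2r ?invr_ge0 //.
rewrite -sqrtr_sqr -sqrtrM // ler_sqrt ?sumr_ge0 // => [|i _]; last exact: sqr_ge0.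
rewrite (bigD1 i0) //= -[X in X <= _]add0r lerD ?sqr_ge0 //.
rewrite (eq_bigr (fun _ => (W n a lam s - W n a lam s') ^+ 2)); last first.
  by move=> i Hi; rewrite /c !wE.
by rewrite sumr_const cardC1 card_ord mulr_natl.
Qed.

End Alg.
Arguments W {R}.
Arguments vt {R n}.

Section Lim.
Variable R : realType.

Lemma G_cvg (p e : R -> R) :
  p r @[r --> +oo%R] --> (1:R) -> e r @[r --> +oo%R] --> (1:R) ->
  (4 * Num.sqrt (p r) * e r * p r / ((e r + p r) * (1 + p r))) @[r --> +oo%R] --> (1:R).
Proof.
move=> hp he.
have FF : Filter (pinfty_nbhs R) by exact: proper_pinfty_nbhs.
have hs : Num.sqrt (p r) @[r --> +oo%R] --> Num.sqrt 1.
  exact: (continuous_cvg _ (@sqrt_continuous R 1) hp).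
have h1 := @cvgM _ _ _ FF _ _ _ _ (@cvgM _ _ _ FF _ _ _ _ (@cvgM _ _ _ FF _ _ _ _ (@cvg_cst _ (4:R) _ _ FF) hs) he) hp.
have h2 := @cvgM _ _ _ FF _ _ _ _ (@cvgD _ _ _ _ FF _ _ _ _ he hp) (@cvgD _ _ _ _ FF _ _ _ _ (@cvg_cst _ (1:R) _ _ FF) hp).
have h3 := @cvgV _ _ _ FF _ _ _ h2.
have := @cvgM _ _ _ FF _ _ _ _ h1 (h3 _).
rewrite sqrtr1 !mulr1 (_ : 4 * ((1 + 1) * (1 + 1))^-1 = 1 :> R); last first.
  by field.
move=> h; apply: h; by rewrite mulf_neq0 // lt0r_neq0 // addr_gt0.
Qed.


Lemma FFp : Filter (pinfty_nbhs R).
Proof. exact: proper_pinfty_nbhs. Qed.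

Lemma expinv_cvg (g : R) : 0 < g ->
  (expR (2 * g * r ^+ 2))^-1 @[r --> +oo%R] --> (0:R).
Proof.
move=> g0.
have H : expR (2 * g * r ^+ 2) @[r --> +oo%R] --> +oo%R.
  apply/(@cvgryPge _ _ _ FFp) => A.
  apply: (filterS2 FFp _ (@nbhs_pinfty_ge R 1 (num_real _))
                         (@nbhs_pinfty_ge R (`|A| / (2 * g)) (num_real _))).
  move=> r /= h1 h2.
  have h3 : `|A| <= 2 * g * r by rewrite mulrC -ler_pdivrMr ?mulr_gt0.
  apply: le_trans (expR_ge1Dx _).
  have hA : A <= `|A| := ler_norm A.
  have h4 : 0 <= (2 * g * r) * (r - 1) by apply: mulr_ge0; [apply: mulr_ge0; [lra|lra]|lra].
  have h5 : 2 * g * r ^+ 2 = (2 * g * r) * (r - 1) + 2 * g * r by ring.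
  lra.
apply: ((@gtr0_cvgV0 _ _ _ FFp (fun r => expR (2 * g * r ^+ 2)) _).2 H).
apply: filterE => r; exact: expR_gt0.
Qed.

Lemma p_cvg (g : R) (n : R -> nat) : 0 < g ->
  ((n r)%:R / expR (2 * g * r ^+ 2)) @[r --> +oo%R] --> (1:R) ->
  ((n r).-1%:R / expR (2 * g * r ^+ 2)) @[r --> +oo%R] --> (1:R).
Proof.
move=> g0 hn.
have hl := @cvgB _ _ _ _ FFp _ _ _ _ hn (@expinv_cvg g g0).
rewrite subr0 in hl.
apply: (@squeeze_cvgr _ _ FFp _ _ _ _ _ _ hl hn).
apply: filterE => r /=.
have e0 : 0 < expR (2 * g * r ^+ 2) := expR_gt0 _.
rewrite -[X in X <= _]/((n r)%:R / expR (2*g*r^+2) - (expR (2*g*r^+2))^-1).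
rewrite -[X in _ - X <= _]mul1r -mulrBl.
rewrite !ler_pM2r ?invr_gt0 //.
case: (n r) => [|m] /=; first by rewrite sub0r lerN10 lexx.
by rewrite -addn1 natrD addrK lexx lerDl ler01.
Qed.

Lemma eh_cvg : expR (- r^-1) @[r --> +oo%R] --> (1:R).
Proof.
have h : r^-1 @[r --> +oo%R] --> (0:R).
  apply: ((@gtr0_cvgV0 _ _ _ FFp (fun r : R => r) _).2 (@cvg_id _ _)).
  exact: (@nbhs_pinfty_gt R 0 (num_real _)).
have h2 := @cvgN _ _ _ _ FFp _ _ h.
rewrite oppr0 in h2.
rewrite -expR0.
exact: (continuous_cvg _ (@continuous_expR R 0) h2).
Qed.

End Lim.

Section Fin.
Variable R : realType.

Lemma W_lb (n : nat) (a lam s dl K : R) : 0 < dl -> s <= a ->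
  a * dl * lam * (s - a) = K * dl -> 0 <= K ->
  K * ((n.-1)%:R * expR (a * a * lam) * expR (a * (s + dl) * lam) /
       ((expR (a * (s + dl) * lam) + (n.-1)%:R * expR (a * a * lam)) *
        (expR (a * s * lam) + (n.-1)%:R * expR (a * a * lam))))
  <= (W n a lam (s + dl) - W n a lam s) / dl.
Proof.
move=> d0 sa hK K0.
rewrite /W.
have -> : a * (s + dl) * lam = a * s * lam + a * dl * lam by ring.
rewrite expRD.
set x := expR (a * s * lam); set y := expR (a * dl * lam).
set c := (n.-1)%:R * expR (a * a * lam).
have x0 : 0 < x := expR_gt0 _.
have y0 : 0 < y := expR_gt0 _.
have c0 : 0 <= c by rewrite mulr_ge0 ?expR_ge0.
have D1 : 0 < x * y + c by rewrite ltr_wpDr ?mulr_gt0.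
have D2 : 0 < x + c by rewrite ltr_wpDr.
have hy : y - 1 <= y * (a * dl * lam).
  have := expR_ge1Dx (- (a * dl * lam)); rewrite expRN -/y => h.
  have : y * (1 - a * dl * lam) <= 1.
    by rewrite mulrC -ler_pdivlMr // mul1r; apply: le_trans h; rewrite lexx.
  lra.
have hys : y * (K * dl) <= (y - 1) * (s - a).
  rewrite -hK mulrA [_ * (s - a)]mulrC [(y - 1) * _]mulrC.
  by rewrite ler_wnM2l // subr_le0.
have E : (x * y * (s + dl) + (n.-1)%:R * (expR (a * a * lam) * a)) / (x * y + c) - (x * s + (n.-1)%:R * (expR (a * a * lam) * a)) / (x + c) =
   dl * (x * y / (x * y + c)) + c * x * ((y - 1) * (s - a)) / ((x * y + c) * (x + c)).
  rewrite /c; field; rewrite -/c (lt0r_neq0 D1) (lt0r_neq0 D2) //.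
rewrite E ler_pdivlMr //.
have P1 : 0 <= dl * (x * y / (x * y + c)).
  by rewrite mulr_ge0 ?ltW // divr_gt0 ?mulr_gt0.
have H2 : K * (c * (x * y) / ((x * y + c) * (x + c))) * dl <=
    c * x * ((y - 1) * (s - a)) / ((x * y + c) * (x + c)).
  have -> : K * (c * (x * y) / ((x * y + c) * (x + c))) * dl =
      c * x * (y * (K * dl)) / ((x * y + c) * (x + c)) by ring.
  rewrite ler_pM2r ?invr_gt0 ?mulr_gt0 //.
  by apply: ler_wpM2l; [exact: mulr_ge0 c0 (ltW x0) | exact: hys].
apply: le_trans H2 _.
rewrite -[X in X <= _]add0r; apply: lerD => //.
Qed.

Lemma ident (g r p Tq c0 eh : R) : 0 < g -> 0 < r -> 0 < p -> 0 < Tq -> 0 < c0 -> 0 < eh ->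
  4 * Num.sqrt p * eh * p / ((eh + p) * (1 + p)) =
  Num.sqrt (p * Tq ^+ 2) * (2 * g * r ^+ 2 * (p * Tq ^+ 2 * c0 * (Tq ^+ 2 * c0 * eh) /
    ((Tq ^+ 2 * c0 * eh + p * Tq ^+ 2 * c0) * (Tq ^+ 2 * c0 + p * Tq ^+ 2 * c0)))) /
  (g / 2 * r ^+ 2 * Tq).
Proof.
move=> g0 r0 p0 T0 c00 e0.
rewrite sqrtrM ?ltW // sqrtr_sqr gtr0_norm //.
have h1 : eh + p != 0 by rewrite lt0r_neq0 // addr_gt0.
have h2 : 1 + p != 0 by rewrite lt0r_neq0 // addr_gt0.
field.
by rewrite h1 h2 !lt0r_neq0 ?addr_gt0 ?mulr_gt0 ?exprn_gt0.
Qed.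


Lemma final (n : R -> nat) (L : R -> \bar R) (g lam al : R) :
  0 < g -> lam * al * (-1 - al) = 2 * g -> lam * al < 0 -> `|al| <= 1 ->
  ((n r)%:R / expR (2 * g * r ^+ 2)) @[r --> +oo%R] --> (1:R) ->
  (forall r, (0%:E <= L r)%E) ->
  (forall r s s', (0 < n r)%N -> `|al * r| <= r -> `|s| <= r -> `|s'| <= r -> s != s' ->
     ((Num.sqrt (n r).-1%:R * `|W (n r) (al * r) lam s - W (n r) (al * r) lam s'| /
        `|s - s'|)%:E <= L r)%E) ->
  exists th : R -> R, (forall r, 0 <= r -> 0 <= th r) /\
     th r @[r --> +oo%R] --> (1:R) /\
     (forall r, 0 <= r -> ((th r * (g / 2) * r ^+ 2 * expR (g * r ^+ 2))%:E <= L r)%E).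
Proof.
move=> g0 hyp la0 al1 hn L0 HL.
pose dl r := - (lam * al * r ^+ 2)^-1.
pose N r := ((n r).-1)%:R : R.
pose K r := 2 * g * r ^+ 2.
pose B r := Num.sqrt (N r) * (K r * (N r * expR (al * r * (al * r) * lam) *
   expR (al * r * (- r + dl r) * lam) /
   ((expR (al * r * (- r + dl r) * lam) + N r * expR (al * r * (al * r) * lam)) *
    (expR (al * r * (- r) * lam) + N r * expR (al * r * (al * r) * lam))))).
pose T r := g / 2 * r ^+ 2 * expR (g * r ^+ 2).
pose cond r := [&& 0 < r, dl r <= 2 * r & (1 < n r)%N].
have Bge0 r : 0 <= B r.
  have hN : 0 <= N r by rewrite /N ler0n.
  rewrite /B; apply: mulr_ge0; first exact: sqrtr_ge0.
  apply: mulr_ge0; first by rewrite /K mulr_ge0 ?sqr_ge0 // mulr_ge0 // ltW.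
  apply: divr_ge0.
    exact: mulr_ge0 (mulr_ge0 hN (expR_ge0 _)) (expR_ge0 _).
  by apply: mulr_ge0; apply: addr_ge0; rewrite ?expR_ge0 ?mulr_ge0 ?expR_ge0.
have Tgt0 r : 0 < r -> 0 < T r.
  by move=> r0; rewrite /T !mulr_gt0 ?expR_gt0 ?exprn_gt0 ?divr_gt0.
exists (fun r => if cond r then B r / T r else 0).
split.
  move=> r r0; case: ifP => // /and3P [r0' _ _].
  by rewrite divr_ge0 // ltW // Tgt0.
split; last first.
  move=> r r0; case: ifP => [/and3P [r0' dr nr] | _]; last first.
    by rewrite !mul0r.
  have dl0 : 0 < dl r.
    have h : lam * al * r ^+ 2 < 0 by rewrite pmulr_llt0 ?exprn_gt0.
    by rewrite /dl oppr_gt0 invr_lt0.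
  have nr0 : (0 < n r)%N by apply: ltn_trans nr.
  have alr : `|al * r| <= r.
    by rewrite normrM (gtr0_norm r0') -[X in _ <= X]mul1r ler_pM2r.
  have sa : - r <= al * r by move: alr; rewrite ler_norml => /andP[].
  have Hs' : `|- r + dl r| <= r by rewrite ler_norml; apply/andP; split; lra.
  have Hs : `|- r| <= r by rewrite normrN gtr0_norm.
  have ne : - r != - r + dl r by apply/eqP => h; lra.
  have Hk : al * r * dl r * lam * (- r - al * r) = K r * dl r.
    have -> : al * r * dl r * lam * (- r - al * r) = dl r * r ^+ 2 * (lam * al * (-1 - al)) by ring.
    by rewrite hyp /K; ring.
  have K0 : 0 <= K r by rewrite /K mulr_ge0 ?sqr_ge0 // mulr_ge0 // ltW.
  apply: le_trans (HL r (-r) (-r + dl r) nr0 alr Hs Hs' ne).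
  rewrite lee_fin.
  have -> : B r / T r * (g / 2) * r ^+ 2 * expR (g * r ^+ 2) = B r / T r * T r by rewrite /T; ring.
  rewrite divfK ?lt0r_neq0 ?Tgt0 //.
  rewrite -mulrA /B ler_wpM2l ?sqrtr_ge0 //.
  apply: le_trans (@W_lb (n r) (al*r) lam (-r) (dl r) (K r) dl0 sa Hk K0) _.
  have -> : - r - (- r + dl r) = - dl r by ring.
  rewrite normrN (gtr0_norm dl0) ler_pM2r ?invr_gt0 // distrC.
  exact: ler_norm.
pose pf r := N r / expR (2 * g * r ^+ 2).
have hp : pf r @[r --> +oo%R] --> (1:R) := @p_cvg _ g n g0 hn.
have hG := @G_cvg _ pf (fun r => expR (- r^-1)) hp (@eh_cvg R).
apply: (cvg_trans _ hG).
apply: (@near_eq_cvg _ _ _ (FFp R)).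
have k0 : 0 < - (lam * al) by rewrite oppr_gt0.
apply: (filterS3 (FFp R) _ (@nbhs_pinfty_ge R 1 (num_real _))
   (@nbhs_pinfty_ge R (- (lam * al))^-1 (num_real _)) (@cvgr_gt _ _ _ (FFp R) _ 1 hp 0 ltr01)).
move=> r /= r1 rk pr.
have r0 : 0 < r by apply: lt_le_trans ltr01 r1.
have e0 : 0 < expR (2 * g * r ^+ 2) := expR_gt0 _.
have N0 : 0 < N r.
  by have := mulr_gt0 pr e0; rewrite /pf divfK ?lt0r_neq0.
have nr : (1 < n r)%N by move: N0; rewrite /N ltr0n; case: (n r) => [|[|m]].
have dr : dl r <= 2 * r.
  have kr : 1 <= - (lam * al) * r by rewrite -ler_pdivrMl // mulr1.
  have kr2 : 1 <= - (lam * al) * r ^+ 2.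
    by rewrite expr2 mulrA; apply: le_trans kr _; rewrite ler_pMr ?mulr_gt0 //.
  rewrite /dl -invrN -mulNr; apply: le_trans (_ : 1 <= 2 * r); last lra.
  by rewrite invf_le1 ?(lt_le_trans ltr01 kr2).
rewrite /cond r0 dr nr /=.
set Tq := expR (g * r ^+ 2).
set c0 := expR (al * r * (al * r) * lam).
set eh := expR (- r^-1).
have T0 : 0 < Tq := expR_gt0 _.
have c00 : 0 < c0 := expR_gt0 _.
have eh0 : 0 < eh := expR_gt0 _.
rewrite (@ident g r (pf r) Tq c0 eh g0 r0 pr T0 c00 eh0).
have ET : expR (2 * g * r ^+ 2) = Tq ^+ 2.
  by rewrite [Tq ^+ 2]expr2 /Tq -expRD; congr expR; ring.
have E3 : N r = pf r * Tq ^+ 2 by rewrite /pf -ET divfK ?lt0r_neq0.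
have E1 : expR (al * r * (- r) * lam) = Tq ^+ 2 * c0.
  rewrite -ET -expRD; congr expR.
  have -> : al * r * - r * lam = r ^+ 2 * (lam * al * (-1 - al)) + al * r * (al * r) * lam by ring.
  by rewrite hyp; ring.
have E2 : expR (al * r * (- r + dl r) * lam) = Tq ^+ 2 * c0 * eh.
  rewrite -E1 -expRD; congr expR.
  rewrite /dl; field.
  have hla : lam * al != 0 := ltr0_neq0 la0.
  move: hla; rewrite mulf_eq0 negb_or => /andP[-> ->].
  by rewrite (lt0r_neq0 r0).
by rewrite /B /T /K E1 E2 E3.
Qed.

End Fin.

Lemma unit_eig (R : realType) d (A : 'M[R]_d) (lam : R) :
  eigenvalue A lam -> exists u : 'rV[R]_d, u *m A = lam *: u /\ \sum_k u 0 k ^+ 2 = 1.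
Proof.
move=> /eigenvalueP [v Hv v0].
set S := \sum_k v 0 k ^+ 2.
have S0 : 0 < S.
  rewrite lt0r sumr_ge0 ?andbT => [|k _]; last exact: sqr_ge0.
  apply/eqP => /psumr_eq0P H; move/eqP: v0; apply; apply/rowP => k.
  have := H (fun i _ => sqr_ge0 _) k isT.
  by move/eqP; rewrite sqrf_eq0 mxE => /eqP.
exists ((Num.sqrt S)^-1 *: v); split.
  by rewrite -scalemxAl Hv !scalerA mulrC.
under eq_bigr do rewrite mxE exprMn.
rewrite -mulr_sumr exprVn sqr_sqrtr ?ltW // mulVf //.
exact: lt0r_neq0.
Qed.

Unset Implicit Arguments.

Theorem mainTheorem6 (R : realType) (d : nat) (Q K : 'M[R]_d)
  (gamma1 gammadelta : R) (n : R -> nat) :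
  let A := (Num.sqrt (d%:R))^-1 *: (K^T *m Q) in
  (* gamma1 is the largest, gammadelta the smallest real eigenvalue of A *)
  eigenvalue A gamma1 -> (forall g, eigenvalue A g -> g <= gamma1) ->
  eigenvalue A gammadelta -> (forall g, eigenvalue A g -> gammadelta <= g) ->
  let gamma := Num.max (- gammadelta) (gamma1 / 8) in
  0 < gamma ->
  ((n r)%:R / expR (2 * gamma * r ^+ 2) : R) @[r --> +oo%R] --> (1 : R) ->
  exists theta : R -> R,
    (forall r, 0 <= r -> 0 <= theta r) /\
    (theta r : R) @[r --> +oo%R] --> (1 : R) /\
    (forall r : R, 0 <= r ->
      ((theta r * (gamma / 2) * r ^+ 2 * expR (gamma * r ^+ 2))%:E <=
       lip_on (@self_attention R (n r) d d A 1%:M) (@ballR_pow R (n r) d r))%E).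
Proof.
move=> A e1 _ ed _ gamma g0 hn.
have L0 r : (0%:E <= lip_on (@self_attention R (n r) d d A 1%:M) (@ballR_pow R (n r) d r))%E.
  by apply: ereal_sup_ubound; left.
have key : forall lam al, eigenvalue A lam -> lam * al * (-1 - al) = 2 * gamma ->
    lam * al < 0 -> `|al| <= 1 ->
  exists theta : R -> R,
    (forall r, 0 <= r -> 0 <= theta r) /\
    (theta r : R) @[r --> +oo%R] --> (1 : R) /\
    (forall r : R, 0 <= r ->
      ((theta r * (gamma / 2) * r ^+ 2 * expR (gamma * r ^+ 2))%:E <=
       lip_on (@self_attention R (n r) d d A 1%:M) (@ballR_pow R (n r) d r))%E).
  move=> lam al el h1 h2 h3.
  have [u [Hu Hn]] := @unit_eig R d A lam el.
  apply: (@final R n (fun r => lip_on (@self_attention R (n r) d d A 1%:M) (@ballR_pow R (n r) d r))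
    gamma lam al g0 h1 h2 h3 hn L0) => r s s' nr0 alr Hs Hs' ne.
  exact: (construct (Ordinal nr0) (al * r) s s' r Hu Hn alr Hs Hs' ne).
have [[hg hle]|[hg hle]] : (gamma = gamma1 / 8 /\ - gammadelta <= gamma1 / 8) \/
    (gamma = - gammadelta /\ gamma1 / 8 < - gammadelta).
  rewrite /gamma maxEle; case: ifP => h; [left|right]; split => //.
  by rewrite ltNge h.
- apply: (key gamma1 (-1/2) e1).
  + by rewrite hg; field.
  + lra.
  + rewrite ler_norml; apply/andP; split; lra.
- apply: (key gammadelta 1 ed); [lra|lra|by rewrite normr1].
Qed.
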